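(* Let $\mathcal{X}$ be a finite-dimensional complex Hilbert space and let $\mathcal{Y}$ be an isometric copy of $\mathcal{X}$. For $\mathcal{P},\mathcal{Q}\in\mathcal{D}(\mathcal{X})$ define $$\mathrm{qW}(\mathcal{P},\mathcal{Q}) := \min_{\pi} \operatorname{Tr}(\pi C)\quad\text{s.t. } \operatorname{Tr}_{\mathcal{Y}}(\pi)=\mathcal{P},\ \operatorname{Tr}_{\mathcal{X}}(\pi)=\mathcal{Q},\ \pi\in\mathcal{D}(\mathcal{X}\otimes\mathcal{Y}),$$ where $C=\frac{1}{2}(\mathrm{I}_{\mathcal{X}\otimes\mathcal{Y}}-\mathrm{SWAP})$. Then $\mathrm{qW}(\cdot,\cdot)$ is a semimetric on $\mathcal{D}(\mathcal{X})$, i.e., for all $\mathcal{P},\mathcal{Q}\in\mathcal{D}(\mathcal{X})$: (1) $\mathrm{qW}(\mathcal{P},\mathcal{Q})\ge 0$; (2) $\mathrm{qW}(\mathcal{P},\mathcal{Q})=\mathrm{qW}(\mathcal{Q},\mathcal{P})$; (3) $\mathrm{qW}(\mathcal{P},\mathcal{Q})=0$ if and only if $\mathcal{P}=\mathcal{Q}$.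
   Context: $\mathcal{D}(\mathcal{Z})$ denotes the set of density operators on a finite-dimensional complex Hilbert space $\mathcal{Z}$, i.e. positive semidefinite operators of trace one. $\operatorname{Tr}_{\mathcal{Y}}$ and $\operatorname{Tr}_{\mathcal{X}}$ denote the partial traces over $\mathcal{Y}$ and $\mathcal{X}$ respectively. Identifying $\mathcal{Y}$ with $\mathcal{X}$, $\mathrm{SWAP}$ is the linear operator on $\mathcal{X}\otimes\mathcal{Y}$ with $\mathrm{SWAP}(x\otimes y)=y\otimes x$ for all $x\in\mathcal{X},y\in\mathcal{Y}$, and $\mathrm{I}_{\mathcal{X}\otimes\mathcal{Y}}$ is the identity. *)

(* Defs.v *)
From HB Require Import structures.
From mathcomp Require Import all_boot all_order all_algebra.
From mathcomp Require Import complex.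
From mathcomp Require Import classical_sets reals.
Set Implicit Arguments. Unset Strict Implicit. Unset Printing Implicit Defensive.
Import Order.TTheory GRing.Theory Num.Theory.
Local Open Scope ring_scope.
Local Open Scope classical_set_scope.

Section QW.
Variables (R : realType) (n : nat).
Local Notation C := (complex R).

Definition adjmx m p (A : 'M[C]_(m, p)) : 'M[C]_(p, m) := (map_mx Num.conj A)^T.

Definition is_density m (A : 'M[C]_m) : Prop :=
  adjmx A = A /\
  (forall v : 'cV[C]_m, 0 <= (adjmx v *m A *m v) 0 0) /\
  \tr A = 1.

(* X (x) Y with X = Y = C^n; basis vector e_i (x) e_j has index mxvec_index i j *)
Definition ptrY (pi : 'M[C]_(n * n)) : 'M[C]_n :=
  \matrix_(i, j) \sum_(k < n) pi (mxvec_index i k) (mxvec_index j k).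
Definition ptrX (pi : 'M[C]_(n * n)) : 'M[C]_n :=
  \matrix_(i, j) \sum_(k < n) pi (mxvec_index k i) (mxvec_index k j).

Definition SWAP : 'M[C]_(n * n) :=
  \sum_(i < n) \sum_(j < n) delta_mx (mxvec_index j i) (mxvec_index i j).

Definition costC : 'M[C]_(n * n) := 2^-1 *: (1%:M - SWAP).

Definition couplings (P Q : 'M[C]_n) : set 'M[C]_(n * n) :=
  [set pi | is_density pi /\ ptrY pi = P /\ ptrX pi = Q].

(* Tr(pi C) is real for Hermitian pi; qW is the optimal value (the minimum is
   attained since the feasible set is compact and nonempty; we take the inf). *)
Definition qW (P Q : 'M[C]_n) : R :=
  inf [set complex.Re (\tr (pi *m costC)) | pi in couplings P Q].

End QW.

(* Main.v *)
Require Import Defs.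
From HB Require Import structures.
From mathcomp Require Import all_boot all_order all_algebra.
From mathcomp Require Import complex.
From mathcomp Require Import classical_sets reals.
From mathcomp Require Import ring lra.
Import Order.TTheory GRing.Theory Num.Theory.
Local Open Scope ring_scope.
Set Implicit Arguments. Unset Strict Implicit. Unset Printing Implicit Defensive.

Section QWProof.
Variables (R : realType) (n : nat).
Local Notation C := (complex R).
Local Notation N := (n * n)%N.
Local Notation mv := (@mxvec_index n n).
Local Notation RE := (@complex.Re R).
Local Notation IM := (@complex.Im R).

Definition unmv (x : 'I_N) : 'I_n * 'I_n :=
  enum_val (cast_ord (esym (mxvec_cast n n)) x).

Lemma mvK i j : unmv (mv i j) = (i, j).
Proof. by rewrite /unmv /mxvec_index cast_ordK enum_rankK. Qed.

Lemma unmvK x : mv (unmv x).1 (unmv x).2 = x.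
Proof. by rewrite /mxvec_index -surjective_pairing /unmv enum_valK cast_ordKV. Qed.

Lemma mv_inj i j k l : mv i j = mv k l -> i = k /\ j = l.
Proof. by move=> /(congr1 unmv); rewrite !mvK => -[-> ->]. Qed.

Lemma sum_mv (F : 'I_N -> C) : \sum_x F x = \sum_i \sum_j F (mv i j).
Proof.
rewrite pair_bigA /= (reindex (fun p : 'I_n * 'I_n => mv p.1 p.2)) //=.
by exists unmv => [p _|x _]; [rewrite mvK -surjective_pairing | rewrite unmvK].
Qed.

Lemma ReD (x y : C) : RE (x + y) = RE x + RE y. Proof. by case: x; case: y. Qed.
Lemma ReN (x : C) : RE (- x) = - RE x. Proof. by case: x. Qed.
Lemma ReB (x y : C) : RE (x - y) = RE x - RE y. Proof. by rewrite ReD ReN. Qed.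
Lemma ImD (x y : C) : IM (x + y) = IM x + IM y. Proof. by case: x; case: y. Qed.
Lemma ReS (I : Type) (r : seq I) (P : pred I) (F : I -> C) :
  RE (\sum_(i <- r | P i) F i) = \sum_(i <- r | P i) RE (F i).
Proof. by apply: (big_morph _ ReD). Qed.
Lemma ImS (I : Type) (r : seq I) (P : pred I) (F : I -> C) :
  IM (\sum_(i <- r | P i) F i) = \sum_(i <- r | P i) IM (F i).
Proof. by apply: (big_morph _ ImD). Qed.
Lemma Re_ge0 (x : C) : 0 <= x -> 0 <= RE x.
Proof. by rewrite lecE => /andP[]. Qed.

Lemma adjmxD m p (A B : 'M[C]_(m, p)) : adjmx (A + B) = adjmx A + adjmx B.
Proof. by rewrite /adjmx map_mxD linearD. Qed.
Lemma adjmxN m p (A : 'M[C]_(m, p)) : adjmx (- A) = - adjmx A.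
Proof. by rewrite /adjmx map_mxN linearN. Qed.
Lemma adjmxB m p (A B : 'M[C]_(m, p)) : adjmx (A - B) = adjmx A - adjmx B.
Proof. by rewrite adjmxD adjmxN. Qed.
Lemma adjmxZ m p a (A : 'M[C]_(m, p)) : adjmx (a *: A) = Num.conj a *: adjmx A.
Proof. by rewrite /adjmx map_mxZ linearZ. Qed.
Lemma adjmxM m p q (A : 'M[C]_(m, p)) (B : 'M[C]_(p, q)) :
  adjmx (A *m B) = adjmx B *m adjmx A.
Proof. by rewrite /adjmx map_mxM trmx_mul. Qed.
Lemma adjmxK m p (A : 'M[C]_(m, p)) : adjmx (adjmx A) = A.
Proof.
by apply/matrixP => i j; rewrite !mxE conjCK.
Qed.
Lemma adjmxE m p (A : 'M[C]_(m, p)) i j : adjmx A i j = Num.conj (A j i).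
Proof. by rewrite !mxE. Qed.

Definition qf (M : 'M[C]_N) (u w : 'cV[C]_N) : C := (adjmx u *m M *m w) 0 0.
Definition ev (x : 'I_N) : 'cV[C]_N := delta_mx x 0.

Lemma qf_ev M x y : qf M (ev x) (ev y) = M x y.
Proof.
rewrite /qf /ev /adjmx map_delta_mx trmx_delta -rowE -colE.
by rewrite !mxE.
Qed.

Lemma qfDl M u1 u2 w : qf M (u1 + u2) w = qf M u1 w + qf M u2 w.
Proof. by rewrite /qf adjmxD !mulmxDl mxE. Qed.
Lemma qfBl M u1 u2 w : qf M (u1 - u2) w = qf M u1 w - qf M u2 w.
Proof. by rewrite /qf adjmxB !mulmxBl !mxE. Qed.
Lemma qfDr M u w1 w2 : qf M u (w1 + w2) = qf M u w1 + qf M u w2.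
Proof. by rewrite /qf !mulmxDr mxE. Qed.
Lemma qfBr M u w1 w2 : qf M u (w1 - w2) = qf M u w1 - qf M u w2.
Proof. by rewrite /qf !mulmxBr !mxE. Qed.
Lemma qfZl M a u w : qf M (a *: u) w = Num.conj a * qf M u w.
Proof. by rewrite /qf adjmxZ -!scalemxAl mxE. Qed.
Lemma qfZr M a u w : qf M u (a *: w) = a * qf M u w.
Proof. by rewrite /qf -!scalemxAr mxE. Qed.
Lemma qf_conj M u w : adjmx M = M -> qf M w u = Num.conj (qf M u w).
Proof.
move=> HM; rewrite /qf -[RHS]adjmxE !adjmxM adjmxK HM.
by rewrite mulmxA.
Qed.



Lemma ReCM (r : R) (z : C) : RE (r%:C%C * z) = r * RE z.
Proof. case: z => a b. rewrite /= mul0r subr0. done. Qed.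
Lemma ReJ (z : C) : RE (Num.conj z) = RE z.
Proof. case: z => a b; reflexivity. Qed.
Lemma conjCr (r : R) : Num.conj (r%:C%C : C) = r%:C%C.
Proof. exact: conjc_real. Qed.

Lemma cs_bound (M : 'M[C]_N) (u w : 'cV[C]_N) (s t : R) (l : C) :
  adjmx M = M -> (forall v, 0 <= qf M v v) -> l * Num.conj l = 1 ->
  - (2 * s * t * RE (l * qf M u w)) <= s ^+ 2 * RE (qf M u u) + t ^+ 2 * RE (qf M w w).
Proof.
move=> herm psd hl.
have := Re_ge0 (psd (s%:C%C *: u + (l * t%:C%C) *: w)).
rewrite qfDl !qfDr !qfZl !qfZr (qf_conj u w herm).
rewrite rmorphM /= !conjCr.
set a := qf M u u; set b := qf M u w; set c := qf M w w.
have -> : s%:C%C * (s%:C%C * a) + s%:C%C * (l * t%:C%C * b) +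
    (Num.conj l * t%:C%C * (s%:C%C * Num.conj b) + Num.conj l * t%:C%C * (l * t%:C%C * c))
  = (s ^+ 2)%:C%C * a + (s * t)%:C%C * (l * b + Num.conj (l * b))
    + (t ^+ 2)%:C%C * c.
  rewrite !(rmorphM (real_complex R)) (rmorphM Num.conj).
  rewrite -[t%:C%C * t%:C%C * c]mul1r -hl; ring.
rewrite !ReD !ReCM ReD ReJ.
lra.
Qed.



Definition Sw (pi : 'M[C]_N) := \sum_i \sum_j pi (mv i j) (mv j i).
Definition vv (i j : 'I_n) := ev (mv i j) - ev (mv j i).

Lemma tr_mv (A : 'M[C]_N) : \tr A = \sum_i \sum_j A (mv i j) (mv i j).
Proof. by rewrite /mxtrace sum_mv. Qed.

Lemma tr_mul_delta (A : 'M[C]_N) a b : \tr (A *m delta_mx a b) = A b a.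
Proof.
rewrite -(mul_delta_mx (0 : 'I_1)) mulmxA mxtrace_mulC mulmxA trace_mx11.
by rewrite -rowE -colE !mxE.
Qed.

Lemma costE (pi : 'M[C]_N) : \tr (pi *m costC R n) = 2^-1 * (\tr pi - Sw pi).
Proof.
rewrite /costC -scalemxAr mxtraceZ mulmxBr mulmx1 linearB /=; congr (_ * (_ - _)).
rewrite /SWAP mulmx_sumr linear_sum /=; apply: eq_bigr => i _.
rewrite mulmx_sumr linear_sum /=; apply: eq_bigr => j _.
by rewrite tr_mul_delta.
Qed.

Lemma qf_vv pi i j : qf pi (vv i j) (vv i j) =
  pi (mv i j) (mv i j) - pi (mv i j) (mv j i) - pi (mv j i) (mv i j) + pi (mv j i) (mv j i).
Proof. rewrite /vv qfBl !qfBr !qf_ev; ring. Qed.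

Lemma sum_qvv pi : \sum_i \sum_j qf pi (vv i j) (vv i j) = (\tr (pi *m costC R n)) *+ 4.
Proof.
rewrite costE.
have -> : (2^-1 * (\tr pi - Sw pi)) *+ 4 = (\tr pi - Sw pi) *+ 2 :> C.
  have h2 : (2 : C) != 0 by rewrite pnatr_eq0.
  rewrite -[_ *+ 4]mulr_natl -[_ *+ 2]mulr_natl; field.
  done.
under eq_bigr do under eq_bigr do rewrite qf_vv.
rewrite !tr_mv /Sw.
under eq_bigr do rewrite big_split /= !sumrB.
rewrite big_split /= !sumrB.
rewrite [X in _ - X + _]exchange_big [X in _ + X]exchange_big /=.
by rewrite mulr2n; ring.
Qed.


Lemma Re0 : RE 0 = 0. Proof. by []. Qed.
Lemma ReMn (z : C) m : RE (z *+ m) = RE z *+ m.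
Proof. by elim: m => [|m IH]; rewrite ?mulr0n ?mulrS ?ReD ?IH. Qed.

Lemma le_sum_one (I : finType) (F : I -> R) (x : I) :
  (forall y, 0 <= F y) -> F x <= \sum_y F y.
Proof.
move=> h; rewrite (bigD1 x) //= lerDl; apply: sumr_ge0 => y _; exact: h.
Qed.

Definition psd (M : 'M[C]_N) := forall v, 0 <= qf M v v.

Lemma density_psd (M : 'M[C]_N) : is_density M -> psd M.
Proof. by case=> _ []. Qed.

Lemma diag_le1 pi x : is_density pi -> RE (qf pi (ev x) (ev x)) <= 1.
Proof.
move=> hd; have [_ [_ htr]] := hd.
have -> : (1 : R) = RE (\tr pi) by rewrite htr.
rewrite /mxtrace ReS qf_ev; apply: (le_sum_one (F := fun y => RE (pi y y))) => y.
by rewrite -qf_ev; apply: Re_ge0; apply: density_psd.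
Qed.

Lemma vv_le pi a k : is_density pi ->
  RE (qf pi (vv a k) (vv a k)) <= RE (\tr (pi *m costC R n)) *+ 4.
Proof.
move=> hd; rewrite -ReMn -sum_qvv ReS.
have h0 : forall i j, 0 <= RE (qf pi (vv i j) (vv i j)).
  by move=> i j; apply: Re_ge0; apply: density_psd.
apply: le_trans (le_sum_one (F := fun i => RE (\sum_j qf pi (vv i j) (vv i j))) a _).
  by rewrite ReS; apply: (le_sum_one (F := fun j => RE (qf pi (vv a j) (vv a j)))).
by move=> i; rewrite ReS; apply: sumr_ge0 => j _.
Qed.

Lemma diff_decomp (pi : 'M[C]_N) a b k :
  pi (mv a k) (mv b k) - pi (mv k a) (mv k b) =
  qf pi (vv a k) (ev (mv k b)) + qf pi (ev (mv k a)) (vv b k) + qf pi (vv a k) (vv b k).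
Proof. rewrite /vv !qfBl !qfBr !qf_ev; ring. Qed.

Lemma marg_diff pi P Q a b : couplings P Q pi ->
  (P - Q) a b = \sum_k (qf pi (vv a k) (ev (mv k b)) + qf pi (ev (mv k a)) (vv b k)
                        + qf pi (vv a k) (vv b k)).
Proof.
move=> [_ [<- <-]]; rewrite !mxE -sumrB; apply: eq_bigr => k _.
by rewrite diff_decomp.
Qed.

Lemma ReMD (l x y : C) : RE (l * (x + y)) = RE (l * x) + RE (l * y).
Proof. by rewrite mulrDr ReD. Qed.

Lemma main_bound P Q pi a b (l : C) (eta : R) : couplings P Q pi ->
  l * Num.conj l = 1 -> 0 < eta -> eta <= 1 ->
  RE (\tr (pi *m costC R n)) <= eta ^+ 2 ->
  - RE (l * (P - Q) a b) <= 9 * n%:R * eta.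
Proof.
move=> hc hl he he1 heps.
have hd : is_density pi by case: hc.
have [herm [hpsd _]] := hd.
rewrite (marg_diff a b hc) mulr_sumr ReS -sumrN.
have -> : 9 * n%:R * eta = \sum_(k < n) (9 * eta).
  by rewrite sumr_const card_ord -[_ *+ n]mulr_natl; ring.
apply: ler_sum => k _.
rewrite !ReMD.
set eps := RE (\tr (pi *m costC R n)).
have e1 := vv_le a k hd; have e2 := vv_le b k hd.
have d1 := diag_le1 (mv k b) hd; have d2 := diag_le1 (mv k a) hd.
rewrite -/eps in e1 e2.
have c1 := cs_bound (vv a k) (ev (mv k b)) 1 eta herm hpsd hl.
have c2 := cs_bound (ev (mv k a)) (vv b k) eta 1 herm hpsd hl.
have c3 := cs_bound (vv a k) (vv b k) 1 1 herm hpsd hl.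
set X1 := RE (l * qf pi (vv a k) (ev (mv k b))) in c1 *.
set X2 := RE (l * qf pi (ev (mv k a)) (vv b k)) in c2 *.
set X3 := RE (l * qf pi (vv a k) (vv b k)) in c3 *.
rewrite !expr1n !mul1r in c1 c2 c3.
rewrite !mulr1 in c1 c2 c3.
set A1 := RE (qf pi (vv a k) (vv a k)) in e1 c1 c3.
set A2 := RE (qf pi (vv b k) (vv b k)) in e2 c2 c3.
set B1 := RE (qf pi (ev (mv k b)) (ev (mv k b))) in d1 c1.
set B2 := RE (qf pi (ev (mv k a)) (ev (mv k a))) in d2 c2.
rewrite -[_ *+ 4]mulr_natr in e1 e2.
have hB1 : 0 <= B1 by apply: Re_ge0; apply: hpsd.
have hB2 : 0 <= B2 by apply: Re_ge0; apply: hpsd.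
have heps' : eps <= eta ^+ 2 by [].
have s1 : eta ^+ 2 <= eta by rewrite expr2 ler_piMr // ltW.
have s2 : 0 <= eta ^+ 2 by apply: exprn_ge0; apply: ltW.
have g1 : eta ^+ 2 * B1 <= eta ^+ 2 by rewrite -[X in _ <= X]mulr1 ler_wpM2l.
have g2 : eta ^+ 2 * B2 <= eta ^+ 2 by rewrite -[X in _ <= X]mulr1 ler_wpM2l.
have f1 : eta * (- X1) <= eta * (5 / 2 * eta).
  rewrite expr2 in g1 heps' s1 s2; lra.
have f2 : eta * (- X2) <= eta * (5 / 2 * eta).
  rewrite expr2 in g2 heps' s1 s2; lra.
rewrite ler_pM2l // in f1; rewrite ler_pM2l // in f2.
lra.
Qed.


Local Open Scope sesquilinear_scope.

Lemma adjmx_tC m p (A : 'M[C]_(m, p)) : adjmx (A ^t* ) = A.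
Proof. by apply/matrixP => i j; rewrite !mxE conjCK. Qed.

Lemma adjmx_delta m p (i : 'I_m) (j : 'I_p) : adjmx (delta_mx i j : 'M[C]_(m, p)) = delta_mx j i.
Proof. by rewrite /adjmx map_delta_mx trmx_delta. Qed.

Lemma spec_decomp (M : 'M[C]_n) : is_density M -> exists d : 'I_n -> C, exists W : 'M[C]_n,
  [/\ forall m, 0 <= d m,
      forall i k, M i k = \sum_m d m * (W i m * Num.conj (W k m)) &
      forall m, \sum_i W i m * Num.conj (W i m) = 1].
Proof.
case=> herm [psdM _].
have hM : M \is hermsymmx.
  by apply/is_hermitianmxP; rewrite expr0 scale1r -{1}herm /adjmx map_trmx.
have /orthomx_spectralP hE := hermitian_normalmx hM.
move: hE; set U := spectralmx M; set sp := spectral_diag M => hE.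
have hU : U \is unitarymx := spectral_unitarymx M.
rewrite invmx_unitary // in hE.
have hUU : U *m U ^t* = 1%:M by apply/unitarymxP.
exists (fun m => sp 0 m), (\matrix_(i, m) Num.conj (U m i)); split.
- move=> m; have := psdM (U ^t* *m delta_mx m 0).
  rewrite adjmxM adjmx_tC adjmx_delta hE !mulmxA.
  rewrite -(mulmxA (delta_mx 0 m) U) hUU mulmx1.
  rewrite -(mulmxA _ U) hUU mulmx1.
  by rewrite -rowE -colE !mxE eqxx mulr1n.
- move=> i k; rewrite {1}hE mul_mx_diag !mxE; apply: eq_bigr => m _.
  rewrite !mxE conjCK; ring.
- move=> m; move/matrixP: hUU => /(_ m m); rewrite !mxE eqxx mulr1n => <-.
  by apply: eq_bigr => i _; rewrite !mxE conjCK mulrC.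
Qed.


Definition gram (I : finType) (c : I -> C) (z : I -> 'cV[C]_N) : 'M[C]_N :=
  \sum_r c r *: (z r *m adjmx (z r)).

Lemma gram_entry (I : finType) (c : I -> C) z x y :
  gram c z x y = \sum_r c r * (z r x 0 * Num.conj (z r y 0)).
Proof.
rewrite /gram summxE; apply: eq_bigr => r _.
by rewrite !mxE big_ord1 adjmxE.
Qed.

Lemma gram_psd (I : finType) (c : I -> C) z : (forall r, 0 <= c r) -> psd (gram c z).
Proof.
move=> hc v; rewrite /qf /gram mulmx_sumr mulmx_suml summxE.
apply: sumr_ge0 => r _.
rewrite -scalemxAr -scalemxAl mxE; apply: mulr_ge0 => //.
have -> : adjmx v *m (z r *m adjmx (z r)) *m v =
    (adjmx v *m z r) *m adjmx (adjmx v *m z r) by rewrite adjmxM adjmxK !mulmxA.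
by rewrite mxE big_ord1 adjmxE; apply: mul_conjC_ge0.
Qed.

Lemma gram_herm (I : finType) (c : I -> C) z : (forall r, 0 <= c r) ->
  adjmx (gram c z) = gram c z.
Proof.
move=> hc; apply/matrixP => x y; rewrite adjmxE !gram_entry rmorph_sum.
apply: eq_bigr => r _; rewrite !rmorphM /= conjCK geC0_conj //; ring.
Qed.

Lemma tr_ptrY (pi : 'M[C]_N) : \tr pi = \tr (ptrY pi).
Proof. by rewrite tr_mv /mxtrace; apply: eq_bigr => i _; rewrite mxE. Qed.

Definition prodc (P Q : 'M[C]_n) : 'M[C]_N :=
  \matrix_(x, y) (P (unmv x).1 (unmv y).1 * Q (unmv x).2 (unmv y).2).

Lemma prodcE P Q i j k l : prodc P Q (mv i j) (mv k l) = P i k * Q j l.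
Proof. by rewrite mxE !mvK. Qed.

Lemma prodc_coupling P Q : is_density P -> is_density Q -> couplings P Q (prodc P Q).
Proof.
move=> hPd hQd.
have [dP [WP [hdP hP hWP]]] := spec_decomp hPd.
have [dQ [WQ [hdQ hQ hWQ]]] := spec_decomp hQd.
have trP : \sum_i P i i = 1 by case: hPd => _ [].
have trQ : \sum_i Q i i = 1 by case: hQd => _ [].
have hc : forall r : 'I_n * 'I_n, 0 <= dP r.1 * dQ r.2 by move=> r; apply: mulr_ge0.
have hg : prodc P Q = gram (fun r : 'I_n * 'I_n => dP r.1 * dQ r.2)
    (fun r => \col_x (WP (unmv x).1 r.1 * WQ (unmv x).2 r.2)).
  apply/matrixP => x y; case/mxvec_indexP: x => i j; case/mxvec_indexP: y => k l.
  rewrite prodcE gram_entry hP hQ big_distrlr /= pair_bigA /=.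
  apply: eq_bigr => -[m m'] _ /=; rewrite !mxE !mvK /= rmorphM; ring.
split; [split; [|split] | split].
- by rewrite hg gram_herm.
- by rewrite hg; apply: gram_psd.
- rewrite tr_mv; under eq_bigr do under eq_bigr do rewrite prodcE.
  by rewrite -big_distrlr /= trP trQ mulr1.
- apply/matrixP => i k; rewrite mxE; under eq_bigr do rewrite prodcE.
  by rewrite -mulr_sumr trQ mulr1.
- apply/matrixP => i k; rewrite mxE; under eq_bigr do rewrite prodcE.
  by rewrite -mulr_suml trP mul1r.
Qed.

Definition diagc (d : 'I_n -> C) (W : 'M[C]_n) : 'M[C]_N :=
  gram d (fun m => \col_x (W (unmv x).1 m * W (unmv x).2 m)).

Lemma diagcE d W i j k l : diagc d W (mv i j) (mv k l) =
  \sum_m d m * (W i m * W j m * Num.conj (W k m * W l m)).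
Proof. by rewrite /diagc gram_entry; apply: eq_bigr => m _; rewrite !mxE !mvK. Qed.

Lemma diagc_coupling P : is_density P -> exists2 pi, couplings P P pi & RE (\tr (pi *m costC R n)) = 0.
Proof.
move=> hPd.
have [d [W [hd hP hW]]] := spec_decomp hPd.
have trP : \tr P = 1 by case: hPd => _ [].
have hY : ptrY (diagc d W) = P.
  apply/matrixP => i k; rewrite mxE; under eq_bigr do rewrite diagcE.
  rewrite exchange_big hP /=; apply: eq_bigr => m _.
  rewrite -[RHS]mulr1 -(hW m) !mulr_sumr; apply: eq_bigr => j _.
  rewrite rmorphM; ring.
have hX : ptrX (diagc d W) = P.
  apply/matrixP => i k; rewrite mxE; under eq_bigr do rewrite diagcE.
  rewrite exchange_big hP /=; apply: eq_bigr => m _.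
  rewrite -[RHS]mulr1 -(hW m) !mulr_sumr; apply: eq_bigr => j _.
  rewrite rmorphM; ring.
exists (diagc d W).
  split; last by split.
  split; [exact: gram_herm | split; [exact: gram_psd | by rewrite tr_ptrY hY]].
rewrite costE.
have -> : Sw (diagc d W) = \tr (diagc d W).
  rewrite tr_mv /Sw; apply: eq_bigr => i _; apply: eq_bigr => j _.
  rewrite !diagcE; apply: eq_bigr => m _; rewrite !rmorphM; ring.
by rewrite subrr mulr0.
Qed.


Definition sw (x : 'I_N) : 'I_N := mv (unmv x).2 (unmv x).1.
Lemma swE i j : sw (mv i j) = mv j i. Proof. by rewrite /sw mvK. Qed.
Lemma swK : involutive sw.
Proof. by move=> x; case/mxvec_indexP: x => i j; rewrite !swE. Qed.
Lemma sw_inj : injective sw. Proof. exact: inv_inj swK. Qed.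

Definition swp (pi : 'M[C]_N) : 'M[C]_N := \matrix_(x, y) pi (sw x) (sw y).

Lemma qf_sum M u w : qf M u w = \sum_x \sum_y Num.conj (u x 0) * M x y * w y 0.
Proof.
rewrite /qf mxE; under eq_bigr do rewrite mxE mulr_suml.
rewrite exchange_big /=; apply: eq_bigr => x _; apply: eq_bigr => y _.
by rewrite adjmxE.
Qed.

Lemma swp_cost pi : \tr (swp pi *m costC R n) = \tr (pi *m costC R n).
Proof.
rewrite !costE; congr (_ * (_ - _)).
  by rewrite /mxtrace [RHS](reindex_inj sw_inj); apply: eq_bigr => x _; rewrite mxE.
rewrite /Sw exchange_big /=; apply: eq_bigr => i _; apply: eq_bigr => j _.
by rewrite mxE !swE.
Qed.

Lemma swp_coupling P Q pi : couplings P Q pi -> couplings Q P (swp pi).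
Proof.
move=> [[herm [hpsd htr]] [hY hX]].
split; [split; [|split] | split].
- apply/matrixP => x y; rewrite adjmxE !mxE.
  by rewrite -adjmxE herm.
- move=> v; change (0 <= qf (swp pi) v v).
  have h : 0 <= qf pi (\col_x v (sw x) 0) (\col_x v (sw x) 0) := hpsd _.
  rewrite qf_sum (reindex_inj sw_inj); under eq_bigr do rewrite (reindex_inj sw_inj).
  rewrite qf_sum in h; move: h; congr (_ <= _).
  by apply: eq_bigr => x _; apply: eq_bigr => y _; rewrite !mxE !swK.
- rewrite -htr /mxtrace [RHS](reindex_inj sw_inj); apply: eq_bigr => x _; by rewrite mxE.
- rewrite -hX; apply/matrixP => i k; rewrite !mxE; apply: eq_bigr => j _.
  by rewrite mxE !swE.
- rewrite -hY; apply/matrixP => i k; rewrite !mxE; apply: eq_bigr => j _.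
  by rewrite mxE !swE.
Qed.

Local Open Scope classical_set_scope.

Lemma img_sub P Q :
  [set RE (\tr (pi *m costC R n)) | pi in couplings P Q] `<=`
  [set RE (\tr (pi *m costC R n)) | pi in couplings Q P].
Proof.
move=> y [pi hpi <-]; exists (swp pi); first exact: swp_coupling.
by rewrite swp_cost.
Qed.

Lemma cost_ge0 pi : is_density pi -> 0 <= RE (\tr (pi *m costC R n)).
Proof.
move=> hd.
have : 0 <= RE (\tr (pi *m costC R n)) *+ 4.
  rewrite -ReMn -sum_qvv ReS; apply: sumr_ge0 => i _; rewrite ReS.
  by apply: sumr_ge0 => j _; apply: Re_ge0; apply: density_psd.
by rewrite pmulrn_lge0.
Qed.


Lemma small_le0 (x K : R) : 0 <= K ->
  (forall eta, 0 < eta -> eta <= 1 -> x <= K * eta) -> x <= 0.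
Proof.
move=> hK h; rewrite leNgt; apply/negP => hx.
have hp : 0 < x + K + 1 by lra.
set e := x / (x + K + 1).
have he : e * (x + K + 1) = x by rewrite /e divfK // gt_eqF.
have e0 : 0 < e by rewrite /e divr_gt0.
have e1 : e <= 1 by rewrite /e ler_pdivrMr // mul1r; lra.
have := h e e0 e1 => hxe.
have : x * (x + K + 1) <= K * e * (x + K + 1) by rewrite ler_pM2r.
rewrite -mulrA he => h2.
have : 0 <= x * x by rewrite mulr_ge0 // ltW.
nra.
Qed.

Lemma Re_i (z : C) : RE ('i%C * z) = - IM z.
Proof. case: z => a b; rewrite /= mul0r mul1r sub0r. done. Qed.
Lemma Re_mi (z : C) : RE (- 'i%C * z) = IM z.
Proof. by rewrite mulNr ReN Re_i opprK. Qed.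
Lemma i_conj : 'i%C * Num.conj 'i%C = 1 :> C.
Proof. apply/eqP; rewrite eq_complex /= !(mul0r, mulr0, mul1r, mulr1, mulrN1, sub0r, add0r, addr0) opprK !eqxx. done. Qed.
Lemma mi_conj : - 'i%C * Num.conj (- 'i%C) = 1 :> C.
Proof. by rewrite rmorphN mulrNN i_conj. Qed.
Lemma complex_eq0 (z : C) : RE z = 0 -> IM z = 0 -> z = 0.
Proof. by case: z => a b /= -> ->. Qed.

End QWProof.

Unset Implicit Arguments.

Theorem theorem1 (R : realType) (n : nat) (P Q : 'M[complex R]_n) :
  is_density P -> is_density Q ->
  [/\ 0 <= qW P Q,
      qW P Q = qW Q P &
      (qW P Q = 0 <-> P = Q)].
Proof.
move=> hP hQ.
have ne : forall P' Q' : 'M[complex R]_n, is_density P' -> is_density Q' ->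
    ([set complex.Re (\tr (pi *m costC R n)) | pi in couplings P' Q'] !=set0)%classic.
  move=> P' Q' hP' hQ'; exists (complex.Re (\tr (prodc P' Q' *m costC R n))).
  by exists (prodc P' Q') => //; apply: prodc_coupling.
have lb : forall P' Q' : 'M[complex R]_n,
    lbound [set complex.Re (\tr (pi *m costC R n)) | pi in couplings P' Q']%classic 0.
  by move=> P' Q' y [pi [hd _] <-]; apply: cost_ge0.
have ge0 : 0 <= qW P Q by apply: lb_le_inf (ne _ _ hP hQ) (lb P Q).
split => //.
- rewrite /qW; congr inf; apply/seteqP; split; exact: img_sub.
split.
- move=> h0; apply/matrixP => a b.
  suff : (P - Q) a b = 0 by rewrite !mxE => /eqP; rewrite subr_eq0 => /eqP.
  set D := (P - Q) a b.
  have key : forall l : complex R, l * Num.conj l = 1 -> - complex.Re (l * D) <= 0.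
    move=> l hl; apply: (@small_le0 R _ (9 * n%:R)) => [|eta he he1].
      by rewrite mulr_ge0.
    have : inf [set complex.Re (\tr (pi *m costC R n)) | pi in couplings P Q]%classic < eta ^+ 2.
      by move: h0; rewrite /qW => ->; rewrite exprn_gt0.
    case/(inf_lt (ne _ _ hP hQ)) => y [pi hpi <-] hy.
    exact: main_bound hpi hl he he1 (ltW hy).
  have k1 := key 1 ltac:(by rewrite rmorph1 mulr1).
  have k2 := key (-1) ltac:(by rewrite rmorphN1 mulrNN mulr1).
  have k3 := key _ (@i_conj R).
  have k4 := key _ (@mi_conj R).
  rewrite mul1r in k1; rewrite mulN1r ReN opprK in k2.
  rewrite Re_i in k3; rewrite Re_mi in k4.
  by apply: complex_eq0; lra.
- move=> hPQ; subst Q.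
  apply/eqP; rewrite eq_le ge0 andbT.
  have [pi hpi h0] := diagc_coupling hP.
  rewrite -h0 /qW.
  have hl : has_lbound [set complex.Re (\tr (pi *m costC R n)) | pi in couplings P P]%classic.
    by exists 0; apply: lb.
  by apply: (ge_inf hl); exists pi.
Qed.
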